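(* Let $n\le -9$ be an odd integer with $3\mid n$. Then $$q_{n+2}-q_{n+4}+(w^2-1)\big(q'_{n+2}-q'_{n+4}\big)\equiv 0\pmod 3,$$ i.e. this polynomial in $\mathbb{Z}[w]$ has all coefficients divisible by $3$, where $'$ denotes $d/dw$.
   Context: Define $q_n\in\mathbb{Z}[w]$ for odd $n\le -1$ by $q_{-1}=w^3-w^2+2w-7$, $q_{-3}=w^5-2w^4-2w^3+5w^2+3w-9$, $q_{-5}=w^7-2w^6-4w^5+8w^4+4w^3-7w^2+2w-7$, and $q_n=(w^2-1)(q_{n+2}-q_{n+4})+q_{n+6}$ for odd $n<-5$. *)

(* Defs.v *)
From HB Require Import structures.
From mathcomp Require Import all_boot all_order all_algebra.
Set Implicit Arguments. Unset Strict Implicit. Unset Printing Implicit Defensive.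
Import Order.TTheory GRing.Theory Num.Theory.
Local Open Scope ring_scope.

(* Qk k = q_{-(2k+1)} : q_{-1}, q_{-3}, q_{-5}, ... *)
Definition Q0 : {poly int} := 'X^3 - 'X^2 + 2%:R *: 'X - 7%:P.
Definition Q1 : {poly int} :=
  'X^5 - 2%:R *: 'X^4 - 2%:R *: 'X^3 + 5%:R *: 'X^2 + 3%:R *: 'X - 9%:P.
Definition Q2 : {poly int} :=
  'X^7 - 2%:R *: 'X^6 - 4%:R *: 'X^5 + 8%:R *: 'X^4 + 4%:R *: 'X^3
  - 7%:R *: 'X^2 + 2%:R *: 'X - 7%:P.

Fixpoint Qtriple (k : nat) : {poly int} * {poly int} * {poly int} :=
  match k with
  | 0%N => (Q0, Q1, Q2)
  | k'.+1 => let: (a, b, c) := Qtriple k' in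
             (b, c, ('X^2 - 1) * (c - b) + a)
  end.

(* Qk k = q_{-(2k+1)}; satisfies Qk (k+3) = (w^2-1)(Qk (k+2) - Qk (k+1)) + Qk k,
   i.e. q_n = (w^2-1)(q_{n+2} - q_{n+4}) + q_{n+6}. *)
Definition Qk (k : nat) : {poly int} := (Qtriple k).1.1.

(* q n for odd n <= -1 ; n = -(2k+1) so k = (-n-1)/2. Values at other n are junk. *)
Definition q (n : int) : {poly int} := Qk `|(- n - 1) %/ 2|%Z%N.

(* Main.v *)
Require Import Defs.
From HB Require Import structures.
From mathcomp Require Import all_boot all_order all_algebra.
From Stdlib Require Import Lia.
From Stdlib Require Import Ring.
Import GRing.Theory Num.Theory.
Local Open Scope ring_scope.

Definition PT := {poly int}.
Definition pz : PT := 0.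
Definition po : PT := 1.
Definition pa (x y : PT) : PT := x + y.
Definition pm (x y : PT) : PT := x * y.
Definition pn (x : PT) : PT := - x.
Definition ps (x y : PT) : PT := x - y.
Lemma PRth : @ring_theory PT pz po pa pm ps pn eq.
Proof. rewrite /pz/po/pa/pm/ps/pn; split=> //. exact: add0r. exact: addrC. exact: addrA. exact: mul1r. exact: mulrC. exact: mulrA. exact: mulrDl. exact: subrr. Qed.
Add Ring PR : PRth.
Lemma paE (x y : PT) : x + y = pa x y. Proof. by []. Qed.
Lemma pmE (x y : PT) : x * y = pm x y. Proof. by []. Qed.
Lemma pnE (x : PT) : - x = pn x. Proof. by []. Qed.
Lemma pzE : (0 : PT) = pz. Proof. by []. Qed.
Lemma poE : (1 : PT) = po. Proof. by []. Qed.
Ltac pring := rewrite ?paE ?pmE ?pnE ?pzE ?poE; ring.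

Definition D : PT := 'X^2 - 1.
Definition c : PT := D - 1.
Definition E k : PT := Qk k.+1 - Qk k.
Definition L (p : PT) : PT := p + D * p^`().
Definition div3 (p : PT) := exists r : PT, p = r *+ 3.

Lemma T1 k : (Qtriple k.+1).1.1 = (Qtriple k).1.2.
Proof. by rewrite /=; case: (Qtriple k) => [[a b] d]. Qed.
Lemma T2 k : (Qtriple k.+1).1.2 = (Qtriple k).2.
Proof. by rewrite /=; case: (Qtriple k) => [[a b] d]. Qed.
Lemma T3 k : (Qtriple k.+1).2 = ('X^2 - 1) * ((Qtriple k).2 - (Qtriple k).1.2) + (Qtriple k).1.1.
Proof. by rewrite /=; case: (Qtriple k) => [[a b] d]. Qed.

Lemma QkS k : Qk k.+3 = D * (Qk k.+2 - Qk k.+1) + Qk k.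
Proof.
rewrite /Qk !T1 !T2 T3; by [].
Qed.

Lemma ErecS k : E k.+2 = c * E k.+1 - E k.
Proof. rewrite /E QkS /c. move: (Qk k.+2) (Qk k.+1) (Qk k) => a b e. pring. Qed.

Lemma Echeb k : E k.+3.+3 = (c * c * c - (c + c + c)) * E k.+3 - E k.
Proof. rewrite !ErecS. move: (E k.+1) (E k) c => a b e. pring. Qed.

Lemma L_lin p r : L (p - r) = L p - L r.
Proof. rewrite /L derivB. move: (p^`()) (r^`()) => a b. move: p r D => *. pring. Qed.

Lemma div3_add p r : div3 p -> div3 r -> div3 (p + r).
Proof. by move=> [a ->] [b ->]; exists (a + b); rewrite mulrnDl. Qed.
Lemma div3_opp p : div3 p -> div3 (- p).
Proof. by move=> [a ->]; exists (- a); rewrite mulNrn. Qed.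
Lemma div3_mul a p : div3 p -> div3 (a * p).
Proof. by move=> [b ->]; exists (a * b); rewrite mulrnAr. Qed.

Lemma Lkey (e6 e3 e0 : PT) : e6 = (c * c * c - (c + c + c)) * e3 - e0 ->
  L e6 = c * c * c * L e3 - L e0 + (D * (c^`() * c * c * e3) - L (c * e3)) *+ 3.
Proof.
move=> ->; rewrite L_lin /L. move: c D => cc dd.
rewrite !derivE !mulrS !mulr0n.
move: (e3^`()) (e0^`()) (cc^`()) => *. pring.
Qed.

Lemma Lstep (e6 e3 e0 : PT) : e6 = (c * c * c - (c + c + c)) * e3 - e0 ->
  div3 (L e3) -> div3 (L e0) -> div3 (L e6).
Proof.
move=> he h3 h0; rewrite (Lkey _ _ _ he); apply: div3_add.
  apply: div3_add; first exact: div3_mul. exact: div3_opp.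
by eexists.
Qed.
Definition R2 (x : PT) : PT := (pa (pn po) (pm x (pa (pn (pa po (pm (pa po po) (pm (pa po po) (pa po (pm (pa po po) po)))))) (pm x (pa (pa po (pm (pa po po) (pm (pa po po) (pm (pa po po) (pm (pa po po) po))))) (pm x (pa (pm (pa po po) (pa po (pm (pa po po) (pm (pa po po) (pm (pa po po) (pa po (pm (pa po po) po))))))) (pm x (pa (pn (pa po (pm (pa po po) (pm (pa po po) (pa po (pm (pa po po) (pa po (pm (pa po po) (pm (pa po po) po))))))))) (pm x (pa (pn (pa po (pm (pa po po) (pa po (pm (pa po po) (pa po (pm (pa po po) (pa po (pm (pa po po) (pa po (pm (pa po po) po))))))))))) (pm x (pa (pm (pa po po) (pa po (pm (pa po po) (pa po (pm (pa po po) (pa po (pm (pa po po) (pm (pa po po) po)))))))) (pm x (pa (pa po (pm (pa po po) (pa po (pm (pa po po) (pa po (pm (pa po po) (pa po (pm (pa po po) po)))))))) (pm x (pa (pn (pm (pa po po) (pm (pa po po) (pa po (pm (pa po po) (pm (pa po po) po)))))) (pm x (pa (pn (pa po (pm (pa po po) (pm (pa po po) po)))) (pm x (pa po (pm (pa po po) po)))))))))))))))))))))).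
Definition RG (x : PT) : PT := (pa po (pm x (pa po (pm x (pa (pn (pm (pa po po) po)) (pm x (pa (pn po) (pm x (pa po (pm x (pa pz (pm x (pa pz (pm x (pa pz (pm x pz)))))))))))))))).
Lemma Qk0 : Qk 0 = Q0. Proof. by []. Qed.
Lemma Qk1 : Qk 1 = Q1. Proof. by []. Qed.
Lemma Qk2 : Qk 2 = Q2. Proof. by []. Qed.
Lemma base2 : L (E 2) = R2 'X *+ 3.
Proof.
rewrite /L /E !QkS Qk0 Qk1 Qk2 /D /Q0 /Q1 /Q2 !derivE /= -!mul_polyC !polyC_natr.
rewrite !mulrS !mulr0n !exprS !expr0 /R2.
move: ('X : PT) => x. pring.
Qed.
Definition G : PT := c * E 0 - E 1.
Lemma baseG : L G = RG 'X *+ 3.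
Proof.
rewrite /G /c /L /E Qk0 Qk1 Qk2 /D /Q0 /Q1 /Q2 !derivE /= -!mul_polyC !polyC_natr.
rewrite !mulrS !mulr0n !exprS !expr0 /RG.
move: ('X : PT) => x. pring.
Qed.

Lemma E5 : E 5 = (c * c * c - (c + c + c)) * E 2 - G.
Proof. rewrite /G !ErecS. move: (E 1) (E 0) c => a b e. pring. Qed.

Lemma Echeb' k : E k.+3.+3 = (c * c * c - (c + c + c)) * E k.+3 - E k.
Proof. exact: Echeb. Qed.

Lemma mainL j : div3 (L (E (3 * j).+2)).
Proof.
suff: div3 (L (E (3 * j).+2)) /\ div3 (L (E (3 * j).+2.+3)) by case.
elim: j => [|j [IH1 IH2]].
  have h2 : div3 (L (E 2)) by exists (R2 'X); exact: base2.
  split => //. apply: (Lstep _ _ _ E5 h2). exists (RG 'X); exact: baseG.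
split.
  by have -> : (3 * j.+1).+2 = (3 * j).+2.+3 by rewrite mulnS.
have -> : (3 * j.+1).+2.+3 = (3 * j).+2.+3.+3 by rewrite mulnS.
exact: (Lstep _ _ _ (Echeb' _)).
Qed.
Lemma arith (N : nat) : ~~ (2 %| N)%N -> (3 %| N)%N -> (9 <= N)%N ->
  exists j, N = (6 * j + 9)%N.
Proof.
move=> h2 h3 h9; case/dvdnP: h3 => a Na; subst N.
have oa : odd a by move: h2; rewrite dvdn2 negbK oddM andbT.
have := odd_double_half a; rewrite oa => ha.
case Eb: a./2 => [|j]; first by move: h9; rewrite -ha Eb.
exists j. rewrite -ha Eb. move: h9 => _. rewrite -!mul2n.
apply/eqP; rewrite eqn_leq; apply/andP; split; apply/leP; rewrite -?plusE -?multE; change (nat_of_bool true) with 1%N; lia.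
Qed.

Lemma qidx (m : nat) : q (- (Posz (2 * m + 1))) = Qk m.
Proof.
rewrite /q opprK.
have -> : ((2 * m + 1)%:Z - 1) = (m%:Z * 2%:Z) by rewrite PoszD addrK mulnC PoszM.
by rewrite mulzK.
Qed.

Theorem lemma5p2 (n : int) :
  ~~ (2 %| n)%Z -> n <= -9 -> (3 %| n)%Z ->
  forall i : nat,
    (3 %| (q (n + 2) - q (n + 4) + ('X^2 - 1) * ((q (n + 2))^`() - (q (n + 4))^`()))`_i)%Z.
Proof.
case: n => [m|m]; first by [].
rewrite NegzE => h2 h9 h3 i.
have [j hj] : exists j, m.+1 = (6 * j + 9)%N.
  apply: arith.
  - by move: h2; rewrite dvdzE abszN.
  - by move: h3; rewrite dvdzE abszN.
  - by move: h9; rewrite lerN2.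
rewrite hj.
have -> : - (6 * j + 9)%:Z + 2 = - (2 * (3 * j).+3 + 1)%N%:Z.
  have -> : (6 * j + 9 = (2 * (3 * j).+3 + 1) + 2)%N.
    apply/eqP; rewrite eqn_leq; apply/andP; split; apply/leP; rewrite -?plusE -?multE; lia.
  by rewrite PoszD opprD addrNK.
have -> : - (6 * j + 9)%:Z + 4 = - (2 * (3 * j).+2 + 1)%N%:Z.
  have -> : (6 * j + 9 = (2 * (3 * j).+2 + 1) + 4)%N.
    apply/eqP; rewrite eqn_leq; apply/andP; split; apply/leP; rewrite -?plusE -?multE; lia.
  by rewrite PoszD opprD addrNK.
rewrite !qidx -derivB.
have [r hr] := mainL j.
change ((3 %| (L (E (3 * j).+2))`_i)%Z).
rewrite hr coefMn.
by apply/dvdzP; exists (r`_i); rewrite mulr_natr.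
Qed.
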